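(* For all $G,H\subseteq A$ and every $\varphi\in\mathcal{L}_{CoRGAL}$, the formula $\langle[G]\rangle\varphi\rightarrow\langle[G\cup H]\rangle\varphi$ is valid.
   Context: Fix a finite set $A$ of agents and a countable set $P$ of propositional variables. The language $\mathcal{L}_{CoRGAL}$ is given by $\varphi ::= p \mid \neg\varphi \mid (\varphi\wedge\varphi) \mid K_a\varphi \mid [\varphi]\varphi \mid [G,\varphi]\varphi \mid [\langle G\rangle]\varphi$ with $p\in P$, $a\in A$, $G\subseteq A$. $\mathcal{L}_{EL}$ is the fragment built only from $p,\neg,\wedge,K_a$. Duals: $\langle\psi\rangle\varphi:=\neg[\psi]\neg\varphi$, $\langle[G]\rangle\varphi:=\neg[\langle G\rangle]\neg\varphi$. For $G\subseteq A$, $\mathcal{L}^G_{EL}$ is the set of formulas $\bigwedge_{i\in G}K_i\varphi_i$ with each $\varphi_i\in\mathcal{L}_{EL}$; $\psi_G,\chi_G$ range over $\mathcal{L}^G_{EL}$. Epistemic models $M=(W,\sim,V)$: $W\neq\emptyset$, each $\sim_a$ an equivalence relation, $V:P\to\mathcal{P}(W)$; $M^\varphi$ is the restriction of $M$ to $\{v:(M,v)\models\varphi\}$. Semantics: standard for $p,\neg,\wedge,K_a$; $(M,w)\models[\varphi]\psi$ iff $(M,w)\models\varphi$ implies $(M^\varphi,w)\models\psi$; $(M,w)\models[G,\chi]\varphi$ iff $(M,w)\models\chi$ and for all $\psi_G$, $(M,w)\models[\psi_G\wedge\chi]\varphi$; $(M,w)\models[\langle G\rangle]\varphi$ iff for every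 $\psi_G$ there is $\chi_{A\setminus G}$ with $(M,w)\models\psi_G\to\langle\psi_G\wedge\chi_{A\setminus G}\rangle\varphi$. Thus $(M,w)\models\langle[G]\rangle\varphi$ iff there is $\psi_G$ such that for all $\chi_{A\setminus G}$, $(M,w)\models\psi_G\wedge[\psi_G\wedge\chi_{A\setminus G}]\varphi$. A formula is valid if true at every pointed model. *)

(* Defs.v *)
From HB Require Import structures.
From mathcomp Require Import ssreflect ssrfun ssrbool eqtype ssrnat seq choice fintype bigop finset.
Set Implicit Arguments. Unset Strict Implicit. Unset Printing Implicit Defensive.

Section CoRGAL.
Variable A : finType.

Inductive form : Type :=
| Var  : nat -> form
| Neg  : form -> form
| Conj : form -> form -> form
| Kn   : A -> form -> form
| Ann  : form -> form -> form
| GAnn : {set A} -> form -> form -> form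
| Coal : {set A} -> form -> form.

Fixpoint isEL (f : form) : bool :=
  match f with
  | Var _ => true
  | Neg g => isEL g
  | Conj g h => isEL g && isEL h
  | Kn _ g => isEL g
  | _ => false
  end.

Definition Top : form := Neg (Conj (Var 0) (Neg (Var 0))).
Definition Imp (f g : form) : form := Neg (Conj f (Neg g)).
Definition Dia (f g : form) : form := Neg (Ann f (Neg g)).
Definition DiaCoal (G : {set A}) (f : form) : form := Neg (Coal G (Neg f)).

Definition bigK (G : {set A}) (phi : A -> form) : form :=
  \big[Conj/Top]_(i in G) Kn i (phi i).

Definition inLG (G : {set A}) (psi : form) : Prop :=
  exists phi : A -> form, (forall i, isEL (phi i)) /\ psi = bigK G phi.

Record model : Type := Model {
  world : Type;
  rel : A -> world -> world -> Prop;
  val : nat -> world -> Prop;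
  rel_refl : forall a w, rel a w w;
  rel_sym : forall a w v, rel a w v -> rel a v w;
  rel_trans : forall a w v u, rel a w v -> rel a v u -> rel a w u
}.

Variable M : model.

(* Satisfaction in the submodel of M with domain D (D = all worlds gives M;
   restriction M^phi corresponds to shrinking D). *)

(* standard semantics of epistemic formulas (used for the quantified
   L^G_EL formulas, which are epistemic) *)
Fixpoint satEL (D : world M -> Prop) (f : form) (w : world M) : Prop :=
  match f with
  | Var p => val p w
  | Neg g => ~ satEL D g w
  | Conj g h => satEL D g w /\ satEL D h w
  | Kn a g => forall v, D v -> rel a w v -> satEL D g v
  | _ => False
  end.

Fixpoint sat (D : world M -> Prop) (f : form) (w : world M) {struct f} : Prop :=
  match f with
  | Var p => val p w
  | Neg g => ~ sat D g w
  | Conj g h => sat D g w /\ sat D h w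
  | Kn a g => forall v, D v -> rel a w v -> sat D g v
  | Ann g h => sat D g w -> sat (fun v => D v /\ sat D g v) h w
  | GAnn G chi g =>
      sat D chi w /\
      forall psi, inLG G psi ->
        ((satEL D psi w /\ sat D chi w) ->
         sat (fun v => D v /\ (satEL D psi v /\ sat D chi v)) g w)
  | Coal G g =>
      forall psi, inLG G psi ->
        exists chi, inLG (~: G) chi /\
          (satEL D psi w ->
           (* <psi /\ chi> g, i.e. ~ [psi /\ chi] ~ g *)
           ~ ((satEL D psi w /\ satEL D chi w) ->
              ~ sat (fun v => D v /\ (satEL D psi v /\ satEL D chi v)) g w))
  end.

End CoRGAL.

Definition holds (A : finType) (M : model A) (w : world M) (f : form A) : Prop :=
  @sat A M (fun _ => True) f w.

Definition valid (A : finType) (f : form A) : Prop :=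
  forall (M : model A) (w : world M), holds w f.

(* Main.v *)
Require Import Defs.
From mathcomp Require Import ssreflect ssrfun ssrbool eqtype ssrnat seq choice fintype bigop finset.
From Stdlib Require Import FunctionalExtensionality PropExtensionality.

Lemma satEL_big (A : finType) (M : model A) D (r : seq A) (P : pred A) (F : A -> form A) v :
  @satEL A M D (\big[@Conj A/Top A]_(i <- r | P i) F i) v <->
  (forall i, i \in r -> P i -> @satEL A M D (F i) v).
Proof.
elim: r => [|x r IH].
  rewrite big_nil; split => // _ /=; tauto.
rewrite big_cons; case Px: (P x) => /=.
  rewrite IH; split.
    move=> [H1 H2] i; rewrite inE => /orP [/eqP -> _ //|]; exact: H2.
  move=> H; split; first by apply: H => //; rewrite inE eqxx.
  by move=> i ir Pi; apply: H => //; rewrite inE ir orbT.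
rewrite IH; split.
  move=> H i; rewrite inE => /orP [/eqP -> |]; first by rewrite Px.
  exact: H.
by move=> H i ir Pi; apply: H => //; rewrite inE ir orbT.
Qed.

Lemma satEL_bigK (A : finType) (M : model A) D (S : {set A}) f v :
  @satEL A M D (bigK S f) v <-> (forall i, i \in S -> @satEL A M D (Kn i (f i)) v).
Proof.
rewrite /bigK satEL_big; split => H i.
  by move=> iS; apply: H => //; exact: mem_index_enum.
by move=> _; apply: H.
Qed.

Lemma satEL_KTop (A : finType) (M : model A) D i v : @satEL A M D (Kn i (Top A)) v.
Proof. move=> /= u _ _; tauto. Qed.

Theorem mainTheorem4 (A : finType) (G H : {set A}) (phi : form A) :
  valid (Imp (DiaCoal G phi) (DiaCoal (G :|: H) phi)).
Proof.
move=> M w; rewrite /holds /Imp /DiaCoal /=.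
move=> [HG HGH]; apply: HGH => HC; apply: HG.
move=> psi [p [Hp ->]].
pose p' := fun i => if i \in G then p i else Top A.
have Hp' : inLG (G :|: H) (bigK (G :|: H) p').
  exists p'; split => // i; rewrite /p'; case: (i \in G) => //.
have [chi' [[c' [Hc' ->]] Hch]] := HC _ Hp'.
pose c := fun i => if i \in H then Top A else c' i.
exists (bigK (~: G) c); split.
  exists c; split => // i; rewrite /c; case: (i \in H) => //.
have Eq : forall v, (@satEL A M (fun _ => True) (bigK G p) v /\
                     @satEL A M (fun _ => True) (bigK (~: G) c) v) <->
                    (@satEL A M (fun _ => True) (bigK (G :|: H) p') v /\
                     @satEL A M (fun _ => True) (bigK (~: (G :|: H)) c') v).
  move=> v; rewrite !satEL_bigK; split.
    move=> [H1 H2]; split => i.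
      rewrite /p' inE; case iG: (i \in G) => /= iH.
        exact: H1.
      exact: satEL_KTop.
    rewrite !inE negb_or => /andP [niG niH].
    have := H2 i; rewrite inE niG /c (negbTE niH); by apply.
  move=> [H1 H2]; split => i iG.
    have := H1 i; rewrite /p' inE iG /=; by apply.
  rewrite /c; case iH: (i \in H); first exact: satEL_KTop.
  apply: H2; rewrite !inE negb_or iH andbT.
  by rewrite inE in iG.
have ED : (fun v => True /\ (@satEL A M (fun _ => True) (bigK (G :|: H) p') v /\
                     @satEL A M (fun _ => True) (bigK (~: (G :|: H)) c') v)) =
          (fun v => True /\ (@satEL A M (fun _ => True) (bigK G p) v /\
                     @satEL A M (fun _ => True) (bigK (~: G) c) v)).
  apply: functional_extensionality => v; apply: propositional_extensionality.
  rewrite (Eq v); tauto.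
move=> Hpsi.
have Hpsi' : @satEL A M (fun _ => True) (bigK (G :|: H) p') w.
  apply/satEL_bigK => i _; rewrite /p'; case iG: (i \in G); last exact: satEL_KTop.
  by move/satEL_bigK: Hpsi; apply.
have := Hch Hpsi'; rewrite ED => K1 K2; apply: K1 => K3; apply: K2.
exact: (proj2 (Eq w) K3).
Qed.
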